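(* Let $a\neq0$, $b\in\mathbb{R}$, $c\neq0$, $A_1=(a,b,c)$, $A_2=(-ae^{c},-be^{-c},-c)$, $0<\alpha<\pi$, and put $S=\sqrt{(a^2+1)e^{2c}-2e^{c}+1}$. Let $\epsilon=-1$ if $a>0$ and $\epsilon=+1$ if $a<0$. If $$\cos\alpha>\frac{e^{c}}{S}\cdot\frac{2-4e^{c}+\epsilon aS+e^{2c}\big(2a^2+2+\epsilon aS\big)}{\sqrt{(a^2+1)e^{6c}+e^{2c}\big(a^2+3+4\epsilon aS\big)+e^{4c}\big(6a^2+3+4\epsilon aS\big)-2e^{c}-4e^{3c}-2e^{5c}+1}},$$ then the translation-like $\alpha$-isoptic surface of $\overline{A_1A_2}$ is infinite: it contains points with arbitrarily large $z$-coordinate.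
   Context: $\mathbf{Sol}$ is $\mathbb{R}^3$ with coordinates $(x,y,z)$, group law $(a,b,c)(x,y,z)=(x+ae^{-z},\,y+be^{z},\,z+c)$, and left-invariant metric $ds^2=e^{2z}dx^2+e^{-2z}dy^2+dz^2$. The translation curve starting at the origin with initial unit vector $(u,v,w)$ is $t\mapsto\big(-\tfrac{u}{w}(e^{-wt}-1),\tfrac{v}{w}(e^{wt}-1),wt\big)$ if $w\neq0$ and $t\mapsto(ut,vt,0)$ if $w=0$. For $P=(p_1,p_2,p_3)$ let $T_P(X,Y,Z)=(p_1+Xe^{-p_3},\,p_2+Ye^{p_3},\,p_3+Z)$; the translation curve from $P$ to $Q$ is the $T_P$-image of the translation curve from the origin to $T_P^{-1}(Q)$. The translation-like $\alpha$-isoptic surface of the translation-like segment $\overline{A_1A_2}$ is the set of points $P\notin\{A_1,A_2\}$ such that the angle at $P$, measured with the metric at $P$, between the initial tangent vectors of the translation curves from $P$ to $A_1$ and from $P$ to $A_2$ equals $\alpha$. Equivalently, $P=(x,y,z)$ lies on it iff $\cos\alpha=\dfrac{e^{z}(x+ae^{c})(x-a)+e^{-z}(y+be^{-c})(y-b)+4\sinh\frac{z+c}{2}\sinh\frac{z-c}{2}}{\sqrt{e^{z+c}(x-a)^2+e^{-(z+c)}(y-b)^2+4\sinh^2\frac{z-c}{2}}\sqrt{e^{z-c}(x+ae^{c})^2+e^{-(z-c)}(y+be^{-c})^2+4\sinh^2\frac{z+c}{2}}}$. *)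

(* Defs.v *)
From Stdlib Require Import Reals Lra.
Open Scope R_scope.

(* Points of Sol = R^3 with coordinates (x,y,z). *)
Definition pt := (R * R * R)%type.
Definition px (P : pt) : R := fst (fst P).
Definition py (P : pt) : R := snd (fst P).
Definition pz (P : pt) : R := snd P.

(* Translation curve starting at the origin with initial vector (u,v,w). *)
Definition tcurve (u v w t : R) : pt :=
  if Req_EM_T w 0 then (u * t, v * t, 0)
  else (- (u / w) * (exp (- (w * t)) - 1), (v / w) * (exp (w * t) - 1), w * t).

Definition TP (P Q : pt) : pt :=
  (px P + px Q * exp (- pz P), py P + py Q * exp (pz P), pz P + pz Q).

(* Differential of T_P (a linear map, independent of the base point):
   it sends the tangent vector (u,v,w) at the origin to
   (u e^{-p3}, v e^{p3}, w) at P.  The initial velocity of tcurve u v w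
   at t = 0 is (u,v,w), so the initial tangent vector at P of the
   translation curve  T_P o tcurve u v w  is  dTP P (u,v,w). *)
Definition dTP (P : pt) (d : pt) : pt :=
  (px d * exp (- pz P), py d * exp (pz P), pz d).

Definition gP (P : pt) (xi eta : pt) : R :=
  exp (2 * pz P) * px xi * px eta + exp (- (2 * pz P)) * py xi * py eta
  + pz xi * pz eta.

Definition angleP (P : pt) (xi eta : pt) : R :=
  acos (gP P xi eta / (sqrt (gP P xi xi) * sqrt (gP P eta eta))).

(* d = (u,v,w) is the initial unit vector (unit for the metric at the
   origin, which is Euclidean) of the translation curve from P to Q:
   T_P (tcurve u v w t) = Q for some parameter t > 0. *)
Definition tdir (P Q : pt) (d : pt) : Prop :=
  px d ^ 2 + py d ^ 2 + pz d ^ 2 = 1 /\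
  exists t : R, 0 < t /\ TP P (tcurve (px d) (py d) (pz d) t) = Q.

Definition isoptic (alpha : R) (A1 A2 : pt) (P : pt) : Prop :=
  P <> A1 /\ P <> A2 /\
  exists d1 d2 : pt, tdir P A1 d1 /\ tdir P A2 d2 /\
    angleP P (dTP P d1) (dTP P d2) = alpha.

(* Main.v *)
Require Import Defs.
From Stdlib Require Import Reals.
From Stdlib Require Import Lra.
From Coquelicot Require Import Coquelicot.
Open Scope R_scope.
Definition U1 a E x s := (a - x)/(s - / E).
Definition V1 b E s := b*s/(E*s - 1).
Definition U2 a E x s := (-(a*E) - x)/(s - E).
Definition V2 b E s := (-b/E)*s/(s/E - 1).
Definition Fg a b E x s :=
  (U1 a E x s * U2 a E x s + V1 b E s * V2 b E s + 1)
  / (sqrt (U1 a E x s ^ 2 + V1 b E s ^ 2 + 1) * sqrt (U2 a E x s ^ 2 + V2 b E s ^ 2 + 1)).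

Lemma pos3 u v : 0 < u*(u*1) + v*(v*1) + 1.
Proof. nra. Qed.
Ltac side := repeat split;
  try (unfold Rdiv in *; intro; lra);
  try apply pos3;
  try (apply Rmult_integral_contrapositive_currified; apply Rgt_not_eq, sqrt_lt_R0, pos3).

Lemma Fg_der_s a b E x s : s <> / E -> s <> E -> E * s <> 1 -> s / E <> 1 ->
  ex_derive (fun s => Fg a b E x s) s.
Proof.
  intros H1 H2 H3 H4. unfold Fg, U1, V1, U2, V2. auto_derive. side.
Qed.
Lemma Fg_der_x a b E x s : s <> / E -> s <> E -> E * s <> 1 -> s / E <> 1 ->
  ex_derive (fun x => Fg a b E x s) x.
Proof.
  intros H1 H2 H3 H4. unfold Fg, U1, V1, U2, V2. auto_derive. side.
Qed.
Lemma Fg_cont_s a b E x s : s <> / E -> s <> E -> E * s <> 1 -> s / E <> 1 ->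
  continuity_pt (fun s => Fg a b E x s) s.
Proof. intros. apply continuity_pt_filterlim. apply (ex_derive_continuous (K:=R_AbsRing) (V:=R_NormedModule)). now apply Fg_der_s. Qed.
Lemma Fg_cont_x a b E x s : s <> / E -> s <> E -> E * s <> 1 -> s / E <> 1 ->
  continuity_pt (fun x => Fg a b E x s) x.
Proof. intros. apply continuity_pt_filterlim. apply (ex_derive_continuous (K:=R_AbsRing) (V:=R_NormedModule) (fun x => Fg a b E x s)). now apply Fg_der_x. Qed.

Lemma nn3 u v : 0 <= u^2+v^2+1.
Proof. nra. Qed.
Lemma pp3 u v : 0 < u^2+v^2+1.
Proof. nra. Qed.
Lemma V0 b E : 0 < E -> V1 b E 0 = 0 /\ V2 b E 0 = 0.
Proof. intros. unfold V1, V2. split; unfold Rdiv; ring. Qed.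


Lemma gx1 a b E : 0<E -> E<>1 -> Fg a b E (a*E/(E-1)) 0 = 1.
Proof.
  intros HE HE1. unfold Fg. destruct (V0 b E HE) as [-> ->].
  assert (Hne : E - 1 <> 0) by lra.
  assert (h1 : U1 a E (a*E/(E-1)) 0 = a*E/(E-1)) by (unfold U1; field; split; lra).
  assert (h2 : U2 a E (a*E/(E-1)) 0 = a*E/(E-1)) by (unfold U2; field; split; lra).
  rewrite h1, h2. set (p := a*E/(E-1)).
  assert (Hq : sqrt (p^2+0^2+1) * sqrt (p^2+0^2+1) = p^2+0^2+1) by (apply sqrt_sqrt; nra).
  rewrite Hq. field. nra.
Qed.

Lemma id1 (a E T : R) : T^2 = a^2*E^2 + (E-1)^2 ->
 ((E-1)^2 + E^2*(a+T)^2)*(E^2*(E-1)^2 + (a*E^2+T)^2) =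
 (a^2*E^2 + (E-1)^2) * ((a ^ 2 + 1) * E^6
             + E^2 * (a ^ 2 + 3 + 4 * a * T)
             + E^4 * (6 * a ^ 2 + 3 + 4 * a * T)
             - 2 * E - 4 * E^3 - 2 * E^5 + 1).
Proof.
  intros H. apply Rminus_diag_uniq.
  replace (_ - _) with ((T^2 - (a^2*E^2 + (E-1)^2)) *
   (1 - 2*E + 2*E^2 + E^2*T^2 - 2*E^3 + 2*E^4 - 2*E^5 + E^6 + 2*a*E^2*T
    + 2*a*E^4*T + a^2*E^2 + 5*a^2*E^4 + a^2*E^6)) by ring.
  rewrite H. ring.
Qed.

Lemma gx0 a b E eps S : 0<E -> E<>1 -> a <> 0 -> (eps = 1 \/ eps = -1) -> 0 < S ->
  S^2 = a^2*E^2 + (E-1)^2 ->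
  Fg a b E ((a*E + eps*S)/(E-1)) 0 =
  E / S * ((2 - 4 * E + eps * a * S + E^2 * (2 * a ^ 2 + 2 + eps * a * S))
     / sqrt ((a ^ 2 + 1) * E^6
             + E^2 * (a ^ 2 + 3 + 4 * eps * a * S)
             + E^4 * (6 * a ^ 2 + 3 + 4 * eps * a * S)
             - 2 * E - 4 * E^3 - 2 * E^5 + 1)).
Proof.
  intros HE HE1 Ha Heps HS HS2. unfold Fg. destruct (V0 b E HE) as [-> ->].
  assert (Hne : E - 1 <> 0) by lra.
  set (T := eps * S).
  assert (HT : T^2 = a^2*E^2 + (E-1)^2) by (unfold T; destruct Heps as [-> | ->]; lra).
  replace (eps * a * S) with (a * T) by (unfold T; ring).
  replace (4 * eps * a * S) with (4 * a * T) by (unfold T; ring).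
  set (D := (a ^ 2 + 1) * E^6 + E^2 * (a ^ 2 + 3 + 4 * a * T)
             + E^4 * (6 * a ^ 2 + 3 + 4 * a * T) - 2 * E - 4 * E^3 - 2 * E^5 + 1).
  assert (h1 : U1 a E ((a*E + T)/(E-1)) 0 = E*(a+T)/(E-1)) by (unfold U1; field; split; lra).
  assert (h2 : U2 a E ((a*E + T)/(E-1)) 0 = (a*E^2+T)/(E*(E-1))) by (unfold U2; field; split; lra).
  fold T. rewrite h1, h2.
  assert (HK : 0 < a^2*E^2 + (E-1)^2) by nra.
  assert (HL := id1 a E T HT). fold D in HL.
  assert (HD : 0 < D).
  { assert (0 < ((E-1)^2 + E^2*(a+T)^2)*(E^2*(E-1)^2 + (a*E^2+T)^2)).
    { assert (He2 : 0 < (E-1)^2).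
      { replace ((E-1)^2) with (Rsqr (E-1)) by (unfold Rsqr; ring). apply Rsqr_pos_lt; lra. }
      assert (0 <= E^2*(a+T)^2) by (apply Rmult_le_pos; apply pow2_ge_0).
      assert (0 < E^2*(E-1)^2) by (apply Rmult_lt_0_compat; [apply pow_lt|]; lra).
      assert (0 <= (a*E^2+T)^2) by apply pow2_ge_0.
      apply Rmult_lt_0_compat; lra. }
    nra. }
  assert (Hsq : sqrt ((E*(a+T)/(E-1))^2 + 0^2 + 1) * sqrt (((a*E^2+T)/(E*(E-1)))^2 + 0^2 + 1)
     = S * sqrt D / (E * (E-1)^2)).
  { rewrite <- sqrt_mult by apply nn3.
    assert (Hpos : 0 <= S * sqrt D / (E * (E-1)^2)).
    { apply Rmult_le_pos. apply Rmult_le_pos. lra. apply sqrt_pos.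
      apply Rlt_le, Rinv_0_lt_compat. apply Rmult_lt_0_compat. lra. nra. }
    rewrite <- (sqrt_pow2 _ Hpos). f_equal.
    replace ((S * sqrt D / (E * (E - 1) ^ 2)) ^ 2) with (S^2 * (sqrt D)^2 / (E^2 * (E-1)^4))
      by (field; split; lra).
    rewrite pow2_sqrt by lra. rewrite HS2, <- HL.
    field. split; lra. }
  rewrite Hsq.
  assert (sqrt D > 0) by (apply sqrt_lt_R0; lra).
  assert (Hnum : E*(a+T)/(E-1) * ((a*E^2+T)/(E*(E-1))) + 0 * 0 + 1 =
     (2 - 4 * E + a * T + E^2 * (2 * a ^ 2 + 2 + a * T)) / (E-1)^2).
  { apply Rminus_diag_uniq.
    replace (_ - _) with ((T^2 - (a^2*E^2 + (E-1)^2))/(E-1)^2) by (field; split; lra).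
    rewrite HT. field. lra. }
  rewrite Hnum. field. repeat split; lra.
Qed.

Lemma gP_dTP P d d' : gP P (dTP P d) (dTP P d') = px d*px d' + py d*py d' + pz d*pz d'.
Proof.
  unfold gP, dTP, px, py, pz; simpl.
  replace (2 * snd P) with (snd P + snd P) by ring.
  rewrite !exp_Ropp, exp_plus.
  assert (exp (snd P) > 0) by apply exp_pos.
  field. lra.
Qed.

Lemma construct a b c alpha xs z : 0 < alpha < PI -> z > c -> z > -c ->
  exp (-z) <> / exp c -> exp (-z) <> exp c -> exp c * exp (-z) <> 1 -> exp (-z) / exp c <> 1 ->
  Fg a b (exp c) xs (exp (-z)) = cos alpha ->
  isoptic alpha (a,b,c) (- a * exp c, - b * exp (- c), - c) (xs,0,z).
Proof.
  intros Hal Hz1 Hz2 H1 H2 H3 H4 Hf.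
  assert (HE : 0 < exp c) by apply exp_pos.
  assert (Hs : 0 < exp (-z)) by apply exp_pos.
  set (s := exp (-z)) in *.
  assert (He1 : exp (c - z) = exp c * s) by (unfold Rminus; rewrite exp_plus; reflexivity).
  assert (He2 : exp (-(c - z)) = / (exp c * s)) by (rewrite exp_Ropp, He1; reflexivity).
  assert (He3 : exp z = / s) by (unfold s; rewrite exp_Ropp, Rinv_inv; reflexivity).
  assert (He4 : exp (-(-c - z)) = exp c * / s)
    by (replace (-(-c-z)) with (c + z) by ring; rewrite exp_plus, He3; reflexivity).
  assert (He5 : exp (-c - z) = / exp c * s)
    by (replace (-c - z) with (-c + -z) by ring; rewrite exp_plus, exp_Ropp; reflexivity).
  assert (Hd1 : s - / exp c <> 0) by (intro; apply H1; lra).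
  assert (Hd2 : s - exp c <> 0) by (intro; apply H2; lra).
  assert (Hd3 : exp c * s - 1 <> 0) by (intro; apply H3; lra).
  assert (Hd4 : s / exp c - 1 <> 0) by (intro; apply H4; lra).
  assert (Hd5 : exp c * s <> 0) by (apply Rgt_not_eq, Rmult_lt_0_compat; lra).
  set (n1 := sqrt (U1 a (exp c) xs s ^ 2 + V1 b (exp c) s ^ 2 + 1)).
  set (n2 := sqrt (U2 a (exp c) xs s ^ 2 + V2 b (exp c) s ^ 2 + 1)).
  assert (Hn1 : 0 < n1) by (apply sqrt_lt_R0, pp3).
  assert (Hn2 : 0 < n2) by (apply sqrt_lt_R0, pp3).
  assert (Hn1s : n1 ^ 2 = U1 a (exp c) xs s ^ 2 + V1 b (exp c) s ^ 2 + 1) by (apply pow2_sqrt, nn3).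
  assert (Hn2s : n2 ^ 2 = U2 a (exp c) xs s ^ 2 + V2 b (exp c) s ^ 2 + 1) by (apply pow2_sqrt, nn3).
  split; [intro H; injection H; intros; lra|].
  split; [intro H; injection H; intros; lra|].
  exists (- U1 a (exp c) xs s / n1, - V1 b (exp c) s / n1, -1 / n1),
         (- U2 a (exp c) xs s / n2, - V2 b (exp c) s / n2, -1 / n2).
  split; [|split].
  - unfold tdir, px, py, pz; simpl. split.
    + replace (_ + _ + _) with ((U1 a (exp c) xs s ^ 2 + V1 b (exp c) s ^ 2 + 1) / n1 ^ 2)
        by (field; lra). rewrite <- Hn1s. field. lra.
    + exists ((z - c) * n1). split; [apply Rmult_lt_0_compat; lra|].
      unfold tcurve. destruct (Req_EM_T (-1 / n1) 0) as [H|H].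
      { exfalso. unfold Rdiv in H. apply Rmult_integral in H. destruct H as [H|H]; [lra|].
        apply Rinv_neq_0_compat in H; lra. }
      unfold TP, px, py, pz; simpl.
      replace (-1 / n1 * ((z - c) * n1)) with (c - z) by (field; lra).
      rewrite He1, He2, exp_Ropp, He3. fold s.
      unfold U1, V1.
      f_equal; [f_equal|]; field; repeat split; auto; lra.
  - unfold tdir, px, py, pz; simpl. split.
    + replace (_ + _ + _) with ((U2 a (exp c) xs s ^ 2 + V2 b (exp c) s ^ 2 + 1) / n2 ^ 2)
        by (field; lra). rewrite <- Hn2s. field. lra.
    + exists ((z + c) * n2). split; [apply Rmult_lt_0_compat; lra|].
      unfold tcurve. destruct (Req_EM_T (-1 / n2) 0) as [H|H].
      { exfalso. unfold Rdiv in H. apply Rmult_integral in H. destruct H as [H|H]; [lra|].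
        apply Rinv_neq_0_compat in H; lra. }
      unfold TP, px, py, pz; simpl.
      replace (-1 / n2 * ((z + c) * n2)) with (- c - z) by (field; lra).
      rewrite He4, He5, (exp_Ropp c), exp_Ropp, He3. fold s.
      unfold U2, V2.
      f_equal; [f_equal|]; field; repeat split; auto; lra.
  - unfold angleP. rewrite !gP_dTP. unfold px, py, pz; simpl.
    replace (- U1 a (exp c) xs s / n1 * (- U1 a (exp c) xs s / n1) +
      - V1 b (exp c) s / n1 * (- V1 b (exp c) s / n1) + -1 / n1 * (-1 / n1)) with 1.
    2:{ replace 1 with (n1 ^ 2 / n1 ^ 2) at 1 by (field; lra). rewrite Hn1s at 1. field. lra. }
    replace (- U2 a (exp c) xs s / n2 * (- U2 a (exp c) xs s / n2) +
      - V2 b (exp c) s / n2 * (- V2 b (exp c) s / n2) + -1 / n2 * (-1 / n2)) with 1.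
    2:{ replace 1 with (n2 ^ 2 / n2 ^ 2) at 1 by (field; lra). rewrite Hn2s at 1. field. lra. }
    rewrite sqrt_1.
    replace (_ / (1 * 1)) with (Fg a b (exp c) xs s).
    2:{ unfold Fg. fold n1 n2. field. lra. }
    rewrite Hf. apply acos_cos. lra.
Qed.

Lemma cont_lt (f : R -> R) y : continuity_pt f 0 -> f 0 < y ->
  exists d, 0 < d /\ forall s, 0 < s < d -> f s < y.
Proof.
  intros Hc Hy. destruct (Hc (y - f 0)) as [d [Hd Hd2]]; [lra|].
  exists d. split; auto. intros s Hs.
  assert (H := Hd2 s). simpl in H. unfold R_dist in H.
  assert (Rabs (f s - f 0) < y - f 0).
  { apply H. split. split; [exact I | lra]. rewrite Rminus_0_r, Rabs_pos_eq; lra. }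
  apply Rabs_def2 in H0. lra.
Qed.
Lemma cont_gt (f : R -> R) y : continuity_pt f 0 -> y < f 0 ->
  exists d, 0 < d /\ forall s, 0 < s < d -> y < f s.
Proof.
  intros Hc Hy. destruct (Hc (f 0 - y)) as [d [Hd Hd2]]; [lra|].
  exists d. split; auto. intros s Hs.
  assert (H := Hd2 s). simpl in H. unfold R_dist in H.
  assert (Rabs (f s - f 0) < f 0 - y).
  { apply H. split. split; [exact I | lra]. rewrite Rminus_0_r, Rabs_pos_eq; lra. }
  apply Rabs_def2 in H0. lra.
Qed.
Lemma expk c : exp (2*c) = exp c ^ 2 /\ exp (3*c) = exp c ^ 3 /\ exp (4*c) = exp c ^ 4
  /\ exp (5*c) = exp c ^ 5 /\ exp (6*c) = exp c ^ 6.
Proof.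
  repeat split;
  [replace (2*c) with (c+c) by ring | replace (3*c) with (c+c+c) by ring
  | replace (4*c) with (c+c+c+c) by ring | replace (5*c) with (c+c+c+c+c) by ring
  | replace (6*c) with (c+c+c+c+c+c) by ring]; rewrite !exp_plus; ring.
Qed.

Theorem lemma4p3 (a b c alpha : R) :
  a <> 0 -> c <> 0 -> 0 < alpha < PI ->
  let A1 : pt := (a, b, c) in
  let A2 : pt := (- a * exp c, - b * exp (- c), - c) in
  let S := sqrt ((a ^ 2 + 1) * exp (2 * c) - 2 * exp c + 1) in
  let eps := if Rlt_dec 0 a then -1 else 1 in
  cos alpha >
    exp c / S *
    ((2 - 4 * exp c + eps * a * S + exp (2 * c) * (2 * a ^ 2 + 2 + eps * a * S))
     / sqrt ((a ^ 2 + 1) * exp (6 * c)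
             + exp (2 * c) * (a ^ 2 + 3 + 4 * eps * a * S)
             + exp (4 * c) * (6 * a ^ 2 + 3 + 4 * eps * a * S)
             - 2 * exp c - 4 * exp (3 * c) - 2 * exp (5 * c) + 1)) ->
  forall M : R, exists P : pt, isoptic alpha A1 A2 P /\ pz P > M.
Proof.
  intros Ha Hc Hal. cbv zeta. intros Hcos M.
  destruct (expk c) as [e2 [e3 [e4 [e5 e6]]]].
  rewrite e2, e3, e4, e5, e6 in Hcos.
  assert (HE : 0 < exp c) by apply exp_pos.
  assert (HE1 : exp c <> 1).
  { intro H. apply Hc. rewrite <- (ln_exp c), H. apply ln_1. }
  set (S := sqrt ((a ^ 2 + 1) * exp c ^ 2 - 2 * exp c + 1)) in Hcos.
  set (eps := if Rlt_dec 0 a then -1 else 1) in Hcos.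
  assert (Heps : eps = 1 \/ eps = -1) by (unfold eps; destruct (Rlt_dec 0 a); auto).
  assert (Ha2 : 0 < a^2) by (replace (a^2) with (Rsqr a) by (unfold Rsqr; ring); apply Rsqr_pos_lt; auto).
  assert (HK : 0 < a^2 * exp c ^ 2) by (apply Rmult_lt_0_compat; [lra | apply pow_lt; lra]).
  assert (HK2 : (a ^ 2 + 1) * exp c ^ 2 - 2 * exp c + 1 = a^2 * exp c ^2 + (exp c - 1)^2) by ring.
  assert (HS2 : S^2 = a^2 * exp c ^ 2 + (exp c - 1)^2).
  { unfold S. rewrite pow2_sqrt; [ring|]. rewrite HK2. apply Rplus_le_le_0_compat; [lra | apply pow2_ge_0]. }
  assert (HS : 0 < S).
  { unfold S. apply sqrt_lt_R0. rewrite HK2. assert (0 <= (exp c - 1)^2) by apply pow2_ge_0. lra. }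
  rewrite <- (gx0 a b (exp c) eps S HE HE1 Ha Heps HS HS2) in Hcos.
  set (x0 := (a * exp c + eps * S) / (exp c - 1)) in Hcos.
  set (x1 := a * exp c / (exp c - 1)).
  assert (Hg1 := gx1 a b (exp c) HE HE1). fold x1 in Hg1.
  assert (Hcos1 : cos alpha < 1).
  { rewrite <- cos_0. apply cos_decreasing_1; lra. }
  assert (Hc00 : 0 <> / exp c) by (apply Rlt_not_eq, Rinv_0_lt_compat; lra).
  assert (Hc01 : 0 <> exp c) by lra.
  assert (Hc02 : exp c * 0 <> 1) by (rewrite Rmult_0_r; lra).
  assert (Hc03 : 0 / exp c <> 1) by (unfold Rdiv; rewrite Rmult_0_l; lra).
  destruct (cont_lt (fun s => Fg a b (exp c) x0 s) (cos alpha)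
     (Fg_cont_s a b (exp c) x0 0 Hc00 Hc01 Hc02 Hc03) ltac:(simpl; lra)) as [d0 [Hd0 Hd0']].
  destruct (cont_gt (fun s => Fg a b (exp c) x1 s) (cos alpha)
     (Fg_cont_s a b (exp c) x1 0 Hc00 Hc01 Hc02 Hc03) ltac:(simpl; lra)) as [d1 [Hd1 Hd1']].
  set (K := Rmax M (Rabs c) + 1).
  set (s := Rmin (Rmin d0 d1 / 2) (exp (- K))).
  assert (HeK : 0 < exp (-K)) by apply exp_pos.
  assert (Hs0 : 0 < s).
  { unfold s. apply Rmin_glb_lt; [| lra].
    assert (0 < Rmin d0 d1) by (apply Rmin_glb_lt; lra). lra. }
  assert (Hsd : s < d0 /\ s < d1).
  { assert (s <= Rmin d0 d1 / 2) by apply Rmin_l.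
    assert (Rmin d0 d1 <= d0) by apply Rmin_l. assert (Rmin d0 d1 <= d1) by apply Rmin_r.
    assert (0 < Rmin d0 d1) by (apply Rmin_glb_lt; lra). lra. }
  assert (HsK : s <= exp (-K)) by apply Rmin_r.
  set (z := - ln s).
  assert (Hzs : exp (-z) = s) by (unfold z; rewrite Ropp_involutive, exp_ln; lra).
  assert (HzK : K <= z).
  { unfold z. assert (ln s <= ln (exp (-K))) by (apply ln_le; lra).
    rewrite ln_exp in H. lra. }
  assert (HKM : M < K /\ Rabs c < K).
  { unfold K. split; [assert (M <= Rmax M (Rabs c)) by apply Rmax_l | assert (Rabs c <= Rmax M (Rabs c)) by apply Rmax_r]; lra. }
  assert (Hcz : c < z /\ -c < z).
  { destruct HKM as [_ H]. split; [assert (c <= Rabs c) by apply Rle_abs | assert (-c <= Rabs c) by (rewrite <- Rabs_Ropp; apply Rle_abs)]; lra. }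
  assert (Hse1 : s < / exp c).
  { rewrite <- exp_Ropp. apply Rle_lt_trans with (exp (-K)); auto. apply exp_increasing. assert (c <= Rabs c) by apply Rle_abs. lra. }
  assert (Hse2 : s < exp c).
  { apply Rle_lt_trans with (exp (-K)); auto. apply exp_increasing.
    assert (-c <= Rabs c) by (rewrite <- Rabs_Ropp; apply Rle_abs). lra. }
  assert (Hs1 : s <> / exp c) by lra.
  assert (Hs2 : s <> exp c) by lra.
  assert (Hs3 : exp c * s <> 1).
  { assert (exp c * s < exp c * / exp c) by (apply Rmult_lt_compat_l; lra).
    rewrite Rinv_r in H; lra. }
  assert (Hs4 : s / exp c <> 1).
  { assert (s * / exp c < exp c * / exp c) by (apply Rmult_lt_compat_r; [apply Rinv_0_lt_compat|]; lra).
    rewrite Rinv_r in H; unfold Rdiv; lra. }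
  set (h := fun x => Fg a b (exp c) x s - cos alpha).
  assert (Hh : continuity h).
  { intro x. unfold h. apply continuity_pt_minus.
    - apply Fg_cont_x; auto.
    - apply continuity_pt_const. intros u v; reflexivity. }
  assert (Hh0 : h x0 < 0) by (unfold h; assert (H := Hd0' s ltac:(lra)); simpl in H; lra).
  assert (Hh1 : 0 < h x1) by (unfold h; assert (H := Hd1' s ltac:(lra)); simpl in H; lra).
  assert (Hxs : exists xs, h xs = 0).
  { destruct (Rle_dec x0 x1) as [Hl|Hl].
    - destruct (IVT_cor h x0 x1 Hh Hl) as [xs [_ Hx]]; [nra|]. eauto.
    - destruct (IVT_cor h x1 x0 Hh) as [xs [_ Hx]]; [lra|nra|]. eauto. }
  destruct Hxs as [xs Hxs].
  exists (xs, 0, z). split; [| unfold pz; simpl; lra].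
  apply construct; try lra; rewrite Hzs; auto.
  unfold h in Hxs. lra.
Qed.
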